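(* Let $\mathbf L=(L,\vee,\wedge,0,1)$ be a complemented modular lattice with $0\ne1$ and $F$ a filter of $\mathbf L$. Then $F$ is a deductive system of $\mathbf L$.
   Context: For $a\in L$, $a^+:=\{x\in L\mid a\vee x=1,\ a\wedge x=0\}$ (the set of all complements of $a$), and $a\to b:=\{x\vee(a\wedge b)\mid x\in a^+\}$. A deductive system of $\mathbf L$ is a subset $D\subseteq L$ such that $1\in D$, and whenever $a\in D$, $b\in L$ and $a\to b\subseteq D$, then $b\in D$. *)

(* Defs.v *)
From mathcomp Require Import all_boot all_order.
Set Implicit Arguments. Unset Strict Implicit. Unset Printing Implicit Defensive.
Import Order.TTheory.
Local Open Scope order_scope.

Definition modular_lattice (d : Order.disp_t) (T : tbLatticeType d) : Prop :=
  forall x y z : T, x <= z -> x `|` (y `&` z) = (x `|` y) `&` z.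

Definition complemented_lattice (d : Order.disp_t) (T : tbLatticeType d) : Prop :=
  forall a : T, exists x : T, a `|` x = \top /\ a `&` x = \bot.

Definition compls (d : Order.disp_t) (T : tbLatticeType d) (a : T) : T -> Prop :=
  fun x => a `|` x = \top /\ a `&` x = \bot.

Definition arrow (d : Order.disp_t) (T : tbLatticeType d) (a b : T) : T -> Prop :=
  fun y => exists x, compls a x /\ y = x `|` (a `&` b).

Definition is_filter (d : Order.disp_t) (T : tbLatticeType d) (F : T -> Prop) : Prop :=
  (exists x, F x) /\
  (forall x y : T, F x -> x <= y -> F y) /\
  (forall x y : T, F x -> F y -> F (x `&` y)).

Definition deductive_system (d : Order.disp_t) (T : tbLatticeType d) (D : T -> Prop) : Prop :=
  D \top /\
  (forall a b : T, D a -> (forall y, arrow a b y -> D y) -> D b).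

(* Main.v *)
Require Import Defs.
From mathcomp Require Import all_boot all_order.
Import Order.TTheory.
Local Open Scope order_scope.

Theorem proposition7 (d : Order.disp_t) (T : tbLatticeType d) (F : T -> Prop) :
  modular_lattice T -> complemented_lattice T -> (\bot : T) <> \top ->
  is_filter F -> deductive_system F.
Proof.
move=> Hmod Hc _ [[x0 Fx0] [Hup Hmeet]]; split.
  by apply: (Hup x0 _ Fx0); apply: lex1.
move=> a b Fa Harr.
have [x [Hj Hm]] := Hc a.
have Fy : F (x `|` (a `&` b)).
  by apply: Harr; exists x; split.
have Fab : F (a `&` b).
  have := Hmeet _ _ Fa Fy.
  have E := Hmod (a `&` b) x a (leIl a b).
  rewrite [x `&` a]meetC Hm joinx0 in E.
  by rewrite meetC joinC -E.
by apply: (Hup _ _ Fab); rewrite leIr.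
Qed.
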